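(* Let $C$ be P. Hall's countable universal locally finite group and let $(c_s)_{s\ge1}$ be a sequence of elements of $C$ with $c_s^2=1$ that generates $C$. Let $(k_s)_{s\ge1}$ be an increasing sequence of integers with $k_{s+1}>2k_s$ for all $s$, and define $f:\mathbb{Z}\to C$ by $f(k_s)=c_s$ and $f(x)=e$ for $x\notin\{k_s:s\ge1\}$. In the unrestricted wreath product $C\wr\wr\mathbb{Z}=C^{\mathbb{Z}}\rtimes\mathbb{Z}$, let $t=(\boldsymbol{e},1)$ and identify $f$ with $(f,0)$. Then the subgroup $\langle f,t\rangle$ contains a subgroup isomorphic to $C$, and $\langle f,t\rangle$ fits in an exact sequence $1\to L\to\langle f,t\rangle\to\mathbb{Z}\to1$ with $L$ locally finite.
   Context: P. Hall's universal group $C$ is the direct union of groups $L_n$, where $L_1=\mathbb{Z}/3\mathbb{Z}$, $L_{n+1}$ is the full symmetric group on the set $L_n$, and $L_n$ embeds in $L_{n+1}$ via the regular representation; it is a simple group. In $C\wr\wr\mathbb{Z}$ elements are pairs $(f,x)$ with $f:\mathbb{Z}\to C$ arbitrary and $x\in\mathbb{Z}$, with product $(f,x)(g,y)=(f\cdot\tau_x g,x+y)$, $\tau_x g(z)=g(z-x)$; $\boldsymbol{e}$ is the constant function $e$. A group is locally finite if every finite subset lies in a finite subgroup. *)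

(* Defs.v *)
From HB Require Import structures.
From mathcomp Require Import all_boot all_order all_algebra all_fingroup.
From Stdlib Require Lists.List.
Set Implicit Arguments. Unset Strict Implicit. Unset Printing Implicit Defensive.
Import GRing.Theory.

(* L_1 = Z/3Z (additive group 'I_3), L_{n+1} = Sym(L_n); here indexed from 0. *)
Fixpoint Lg (n : nat) : finGroupType :=
  match n with
  | 0 => ('I_3 : finGroupType)
  | n'.+1 => ({perm (Lg n')} : finGroupType)
  end.

Definition Lemb (n : nat) (x : Lg n) : Lg n.+1 := perm (@mulIg (Lg n) x).

Record gops := GOps {
  gcar :> Type;
  gmul : gcar -> gcar -> gcar;
  gone : gcar;
  ginv : gcar -> gcar }.

Definition is_group (G : gops) : Prop :=
  (forall a b c : G, gmul a (gmul b c) = gmul (gmul a b) c) /\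
  (forall a : G, gmul (gone G) a = a) /\
  (forall a : G, gmul (ginv a) a = gone G).

Definition is_subgroup (G : gops) (H : G -> Prop) : Prop :=
  H (gone G) /\ (forall a b, H a -> H b -> H (gmul a b)) /\
  (forall a, H a -> H (ginv a)).

Definition gen (G : gops) (S : G -> Prop) : G -> Prop :=
  fun w => forall H : G -> Prop, is_subgroup H -> (forall x, S x -> H x) -> H w.

Definition locally_finite (G : gops) (K : G -> Prop) : Prop :=
  forall s : list G, (forall x, List.In x s -> K x) ->
  exists H : G -> Prop, is_subgroup H /\ (forall x, H x -> K x) /\
    (forall x, List.In x s -> H x) /\
    exists e : list G, forall x, H x -> List.In x e.

(* C is (isomorphic to) P. Hall's universal group: a group that is the direct
   union of injective copies of the L_n, compatible with the regular embeddings *)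
Definition is_Hall_universal (C : gops) : Prop :=
  is_group C /\
  exists phi : forall n, Lg n -> C,
    (forall n (x y : Lg n), phi n (x * y)%g = gmul (phi n x) (phi n y)) /\
    (forall n, injective (phi n)) /\
    (forall n (x : Lg n), phi n.+1 (Lemb x) = phi n x) /\
    (forall c : C, exists n (x : Lg n), phi n x = c).

Definition wr_mul (C : gops) (u v : (int -> C) * int) : (int -> C) * int :=
  (fun z => gmul (u.1 z) (v.1 (z - u.2)%R), (u.2 + v.2)%R).
Definition wr_one (C : gops) : (int -> C) * int := (fun _ => gone C, 0%R).
Definition wr_inv (C : gops) (u : (int -> C) * int) : (int -> C) * int :=
  (fun z => ginv (u.1 (z + u.2)%R), (- u.2)%R).
Definition Wr (C : gops) : gops :=
  @GOps ((int -> C) * int) (@wr_mul C) (wr_one C) (@wr_inv C).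

(* Main.v *)
Require Import Defs.
From HB Require Import structures.
From mathcomp Require Import all_boot all_order all_algebra all_fingroup all_solvable.
From mathcomp Require Import zify ring.
From Stdlib Require Import ClassicalEpsilon FunctionalExtensionality.
From Stdlib Require Lists.List.
Set Implicit Arguments. Unset Strict Implicit. Unset Printing Implicit Defensive.

Definition asb (P : Prop) : bool :=
  if excluded_middle_informative P then true else false.
Lemma asbP (P : Prop) : reflect P (asb P).
Proof. rewrite /asb; case: excluded_middle_informative => h; constructor; done. Qed.

Section GC.
Variable C : gops.
Hypothesis HG : is_group C.
Local Notation "x ** y" := (gmul x y) (at level 40, left associativity).
Local Notation e := (gone C).
Local Notation iv := (@ginv C).

Lemma gA (a b c : C) : a ** (b ** c) = a ** b ** c.
Proof. by case: HG => h _; apply: h. Qed.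
Lemma g1x (a : C) : e ** a = a.
Proof. by case: HG => _ [h _]; apply: h. Qed.
Lemma gVx (a : C) : iv a ** a = e.
Proof. by case: HG => _ [_ h]; apply: h. Qed.
Lemma gcanl (a b c : C) : a ** b = a ** c -> b = c.
Proof. by move=> h; rewrite -(g1x b) -(g1x c) -(gVx a) -!gA h. Qed.
Lemma gx1 (a : C) : a ** e = a.
Proof. apply: (@gcanl (iv a)); by rewrite gA gVx g1x. Qed.
Lemma gxV (a : C) : a ** iv a = e.
Proof. apply: (@gcanl (iv a)); by rewrite gA gVx g1x gx1. Qed.
Lemma gcanr (a b c : C) : b ** a = c ** a -> b = c.
Proof. by move=> h; rewrite -(gx1 b) -(gx1 c) -(gxV a) !gA h. Qed.
Lemma gVK (a : C) : iv (iv a) = a.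
Proof. apply: (@gcanr (iv a)); by rewrite gVx gxV. Qed.
Lemma ginv_uniq (a b : C) : a ** b = e -> iv a = b.
Proof. move=> h; apply: (@gcanl a); by rewrite gxV. Qed.
Lemma gVM (a b : C) : iv (a ** b) = iv b ** iv a.
Proof. apply: ginv_uniq; by rewrite gA -(gA a) gxV gx1 gxV. Qed.
Lemma gV1 : iv e = e.
Proof. by apply: ginv_uniq; rewrite g1x. Qed.
Lemma ginv_invol (a : C) : a ** a = e -> iv a = a.
Proof. exact: ginv_uniq. Qed.
Lemma gmulKV (a b : C) : a ** (iv a ** b) = b.
Proof. by rewrite gA gxV g1x. Qed.
Lemma gmulVK (a b : C) : iv a ** (a ** b) = b.
Proof. by rewrite gA gVx g1x. Qed.
End GC.
Lemma invol_odd (T : finType) n : forall s : {perm T}, (s * s = 1)%g ->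
  #|[set x | s x != x]| = n.*2 -> odd_perm s = odd n.
Proof.
elim: n => [|n IH] s ss hc.
  have -> : s = 1%g.
    apply/permP => x; rewrite perm1; apply/eqP; apply/negPn/negP => hx.
    have hxin : x \in [set x | s x != x] by rewrite inE.
    have : 0 < #|[set x | s x != x]| by apply/card_gt0P; exists x.
    by rewrite hc.
  by rewrite odd_perm1.
have sK : forall y, s (s y) = y by move=> y; rewrite -permM ss perm1.
have : 0 < #|[set x | s x != x]| by rewrite hc.
case/card_gt0P => x; rewrite inE => hx.
pose s' := (tperm x (s x) * s)%g.
have s'E : forall y, s' y = s (tperm x (s x) y) by move=> y; rewrite permM.
have hx' : x != s x by rewrite eq_sym.
have s'K : (s' * s' = 1)%g.
  apply/permP => y; rewrite permM perm1 !s'E.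
  case: (tpermP x (s x) y) => [->|->|/eqP h1 /eqP h2].
  - by rewrite sK tpermL sK.
  - by rewrite tpermR.
  - rewrite tpermD ?sK //.
    + by apply/eqP => h; move: h2; rewrite h sK eqxx.
    + by apply/eqP => /perm_inj h; move: h1; rewrite h eqxx.
have hmov : [set y | s y != y] = x |: (s x |: [set y | s' y != y]).
  apply/setP => y; rewrite !inE s'E.
  case: (tpermP x (s x) y) => [->|->|/eqP h1 /eqP h2].
  - by rewrite eqxx hx.
  - by rewrite sK eqxx !(orTb, orbT) hx'.
  - by rewrite (negbTE h1) (negbTE h2).
have hc' : #|[set y | s' y != y]| = n.*2.
  move: hc; rewrite hmov cardsU1 cardsU1 !inE s'E tpermL sK eqxx s'E tpermR eqxx /=.
  rewrite doubleS; lia.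
have := IH s' s'K hc'; rewrite /s' odd_mul_tperm hx' addTb /= => <-.
by rewrite negbK.
Qed.

Lemma LembM n (x y : Lg n) : Lemb (x * y)%g = (Lemb x * Lemb y)%g.
Proof. by apply/permP => z; rewrite permM !permE /= mulgA. Qed.
Lemma Lemb1 n : Lemb (1%g : Lg n) = 1%g.
Proof. by apply/permP => z; rewrite permE perm1 /= mulg1. Qed.
Lemma Lemb_inj n : injective (@Lemb n).
Proof.
move=> x y h; have := congr1 (fun p : {perm Lg n} => p 1%g) h.
by rewrite /= !permE /= !mul1g.
Qed.

Lemma card_Lg_succ n : #|Lg n.+1| = #|Lg n|`!.
Proof. by rewrite -card_Sym cardsT. Qed.
Lemma card_Lg_ge3 n : 3 <= #|Lg n|.
Proof.
elim: n => [|n IH]; first by rewrite /= card_ord.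
rewrite card_Lg_succ; apply: leq_trans IH _.
by case: #|Lg n| => // m; rewrite factS leq_pmulr ?fact_gt0.
Qed.
Lemma card_Lg_ge6 n : 6 <= #|Lg n.+1|.
Proof.
rewrite card_Lg_succ; have := card_Lg_ge3 n.
case: #|Lg n| => [|[|[|m]]] // _.
by rewrite !factS; have := fact_gt0 m; nia.
Qed.

Lemma Lemb_tperm_even n (a b : Lg n) : 4 <= #|Lg n| -> a != b ->
  odd_perm (@Lemb n.+1 (tperm a b : Lg n.+1)) = false.
Proof.
move=> h4 hab.
set t := (tperm a b : Lg n.+1).
have tt1 : (t * t)%g = 1%g by rewrite /t tperm2.
have t1 : t != 1%g.
  apply/eqP => /(congr1 (fun p : {perm Lg n} => p a)); rewrite /t tpermL perm1.
  by move/eqP; rewrite eq_sym (negbTE hab).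
set m := #|Lg n|`!.
have d4 : 4 %| m by apply: dvdn_fact; rewrite h4.
have hc : #|[set x | @Lemb n.+1 t x != x]| = ((m %/ 4).*2).*2.
  have -> : [set x | @Lemb n.+1 t x != x] = setT.
    apply/setP => x; rewrite !inE permE /=.
    apply/negP => /eqP h; move/eqP: t1; apply.
    by rewrite -(mul1g t) -(mulVg x) -mulgA h mulVg.
  rewrite cardsT card_Lg_succ -/m -!mul2n mulnA.
  have := divnK d4; lia.
rewrite (invol_odd _ hc) ?odd_double //.
by apply/permP => x; rewrite permM perm1 !permE /= -mulgA tt1 mulg1.
Qed.

Lemma Lemb_even n (y : Lg n.+1) : 4 <= #|Lg n| -> odd_perm (@Lemb n.+1 y) = false.
Proof.
move=> h4.
have [ts -> hts] := prod_tpermP (y : {perm Lg n}).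
elim: ts hts => [|t ts IH] /=; first by rewrite big_nil Lemb1 odd_perm1.
case/andP => ht hts; rewrite big_cons.
rewrite (LembM (tperm t.1 t.2 : Lg n.+1)) odd_permM IH //.
by rewrite Lemb_tperm_even.
Qed.

Lemma normal_Sym_Alt (T : finType) (P : {group {perm T}}) (x : {perm T}) :
  4 < #|T| -> (forall u v, u \in P -> (u ^ v)%g \in P) -> x \in P -> x != 1%g ->
  Alt T \subset P.
Proof.
move=> h5 hn xP x1.
have [a ha] : exists a, x a != a.
  apply/existsP; apply: contraR x1; rewrite negb_exists => /forallP h.
  by apply/eqP/permP => z; rewrite perm1; apply/eqP; rewrite -[_ == _]negbK h.
have [c hc] : exists c, (c != a) && (c != x a).
  apply/existsP; apply: contraLR h5; rewrite negb_exists => /forallP h.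
  rewrite -leqNgt -cardsT.
  have hs : [set: T] \subset [set a; x a].
    apply/subsetP => z _; rewrite !inE.
    by have := h z; rewrite negb_and !negbK orbC.
  apply: leq_trans (subset_leq_card hs) _.
  by rewrite cards2; case: (a != x a).
case/andP: hc => hca hcx.
set s := tperm (x a) c.
set w := (x^-1 * x ^ s)%g.
have wP : w \in P by rewrite groupM ?groupV ?hn.
have wA : w \in Alt T by rewrite Alt_even /w odd_permM odd_permV odd_permJ addbb.
have w1 : w != 1%g.
  apply/eqP => h.
  have hxs : (x ^ s)%g = x by rewrite -(mulKVg x (x ^ s)%g) -/w h mulg1.
  have := permJ x s a; rewrite hxs.
  have -> : s a = a by rewrite /s tpermD // eq_sym.
  rewrite /s tpermL => /eqP; by rewrite eq_sym (negbTE hcx).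
have nP : (P <| Sym_group T)%g.
  apply/andP; split; first exact: subsetT.
  apply/subsetP => y _; rewrite inE; apply/subsetP => z.
  rewrite mem_conjg => hz; by rewrite -(conjgKV y z) hn.
have := normalGI (subsetT (Alt_group T)) nP.
have /simpleP[_ hs] := simple_Alt5 h5.
case/hs => hH.
  have : w \in (Alt_group T :&: P)%G by rewrite inE wA wP.
  by rewrite hH inE (negbTE w1).
by rewrite -hH subsetIr.
Qed.

Lemma mem_In (T : eqType) (x : T) (s : seq T) : x \in s -> List.In x s.
Proof. elim: s => [|y s IH] //=; rewrite inE => /orP[/eqP ->|h]; [by left|right; exact: IH]. Qed.

Section Hall.
Local Unset Implicit Arguments.
Variables (C : gops) (HG : is_group C) (phi : forall n, Lg n -> C).
Hypotheses (phiM : forall n (x y : Lg n), phi n (x * y)%g = gmul (phi n x) (phi n y))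
  (phiI : forall n, injective (phi n))
  (phiL : forall n (x : Lg n), phi n.+1 (Lemb x) = phi n x)
  (phiS : forall c : C, exists n (x : Lg n), phi n x = c).
Local Notation "x ** y" := (gmul x y) (at level 40, left associativity).
Local Notation e := (gone C).
Local Notation iv := (@ginv C).

Lemma phi1 n : phi n 1%g = e.
Proof.
apply: (@gcanl _ HG (phi n 1%g)); by rewrite -phiM mulg1 gx1.
Qed.
Lemma phiV n (x : Lg n) : phi n x^-1%g = iv (phi n x).
Proof.
apply: (@gcanl _ HG (phi n x)); by rewrite -phiM mulgV phi1 gxV.
Qed.

Lemma phi_up n m : n <= m -> forall x : Lg n, exists y : Lg m, phi m y = phi n x.
Proof.
elim: m => [|m IH] hle x.
  have h0 : n = 0 by case: n hle x.
  by subst n; exists x.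
case: (ltngtP n m.+1) hle => // [hl|hq] _.
  have [y hy] := IH hl x; exists (Lemb y); by rewrite phiL.
by subst n; exists x.
Qed.

Lemma level_list (l : seq C) : exists n, forall a, List.In a l -> exists y : Lg n, phi n y = a.
Proof.
elim: l => [|a l [n IH]]; first by exists 0.
have [m [x hx]] := phiS a.
exists (maxn n m) => b /= [<-|hb].
  have [y hy] := phi_up _ _ (leq_maxr n m) x; exists y; by rewrite hy.
have [y0 hy0] := IH b hb.
have [y hy] := phi_up _ _ (leq_maxl n m) y0; exists y; by rewrite hy.
Qed.

Lemma C_not_fin n : ~ (forall a, exists y : Lg n, phi n y = a).
Proof.
move=> h.
pose g (x : Lg n.+1) : Lg n := odflt 1%g [pick y | asb (phi n y = phi n.+1 x)].
have gE : forall x, phi n (g x) = phi n.+1 x.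
  move=> x; rewrite /g; case: pickP => [y /asbP //|hn].
  have [y hy] := h (phi n.+1 x); by move: (hn y) => /asbP.
have gI : injective g by move=> x y hxy; apply: (phiI n.+1); rewrite -!gE hxy.
have := leq_card g gI; rewrite card_Lg_succ.
have := card_Lg_ge3 n; case: #|Lg n| => [|[|[|k]]] // _.
rewrite !factS; have := fact_gt0 k; nia.
Qed.

Lemma C_nonab : exists a b : C, a ** b <> b ** a.
Proof.
pose o0 := (Ordinal (isT : 0 < 3)) : Lg 0.
pose o1 := (Ordinal (isT : 1 < 3)) : Lg 0.
pose o2 := (Ordinal (isT : 2 < 3)) : Lg 0.
pose x := (tperm o0 o1 : Lg 1). pose y := (tperm o1 o2 : Lg 1).
exists (phi 1 x), (phi 1 y); rewrite -!phiM => /phiI h.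
have := congr1 (fun p : {perm Lg 0} => p o0) h.
rewrite /= !permM /x /y !permE /=.
by [].
Qed.

Lemma C_simple (N : C -> Prop) : N e -> (forall a b, N a -> N b -> N (a ** b)) ->
  (forall a, N a -> N (iv a)) -> (forall g a, N a -> N (g ** a ** iv g)) ->
  forall v, N v -> v <> e -> forall a, N a.
Proof.
move=> N1 NM NV NJ v Nv ve a.
have [n0 [x0 hx0]] := phiS v.
have [m0 [y0 hy0]] := phiS a.
set p := (n0 + m0).+1.
have hn0 : n0 <= p.+1 by rewrite /p; lia.
have hm0 : m0 <= p.+1 by rewrite /p; lia.
have [x1 hx1] := phi_up _ _ hn0 x0.
have [y1 hy1] := phi_up _ _ hm0 y0.
pose P := [set z : Lg p.+2 | asb (N (phi p.+2 z))].
have gP : group_set P.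
  apply/group_setP; split; first by rewrite inE phi1; apply/asbP.
  move=> u w; rewrite !inE => /asbP hu /asbP hw; apply/asbP; by rewrite phiM; apply: NM.
pose PG := Group gP.
have hJ : forall u w, u \in PG -> (u ^ w)%g \in PG.
  move=> u w; rewrite !inE => /asbP hu; apply/asbP.
  rewrite /conjg !phiM phiV.
  have := NJ (iv (phi p.+2 w)) _ hu; by rewrite (gVK HG) (gA HG).
have x2P : (Lemb x1 : {perm Lg p.+1}) \in PG.
  by rewrite inE; apply/asbP; rewrite phiL hx1 hx0.
have x21 : (Lemb x1 : {perm Lg p.+1}) != 1%g.
  apply/eqP => h1; apply: ve.
  rewrite -hx0 -hx1 -phiL.
  have -> : Lemb x1 = 1%g by exact: h1.
  by rewrite phi1.
have hA := normal_Sym_Alt (_ : 4 < #|Lg p.+1|) hJ x2P x21.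
have : (Lemb y1 : {perm Lg p.+1}) \in PG.
  apply: (subsetP (hA _)); first by apply: leq_trans (card_Lg_ge6 _).
  rewrite Alt_even; apply/negbT.
  have h4 : 4 <= #|Lg p| by apply: leq_trans (card_Lg_ge6 _).
  exact: (Lemb_even y1 h4).
by rewrite inE => /asbP; rewrite phiL hy1 hy0.
Qed.

Lemma C_fg (c : nat -> C) (hgen : forall g : C, gen (fun x => exists s, x = c s) g) (S : nat) :
  ~ (forall s, (S <= s)%N -> c s = e).
Proof.
move=> hS.
have [n hn] := level_list [seq c s | s <- iota 0 S].
move: (C_not_fin n); apply => a.
have := hgen a; rewrite /gen => h; apply: (h (fun a => exists y : Lg n, phi n y = a)).
- split; first by exists 1%g; rewrite phi1.
  split.
    by move=> a1 b1 [y1 <-] [y2 <-]; exists (y1 * y2)%g; rewrite phiM.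
  by move=> a1 [y1 <-]; exists (y1^-1)%g; rewrite phiV.
- move=> x [s ->]; case: (ltnP s S) => hs.
    apply: hn; apply: List.in_map; apply: mem_In; by rewrite mem_iota.
  by exists 1%g; rewrite phi1 hS.
Qed.

End Hall.


Lemma In_mem (T : eqType) (x : T) (s : seq T) : List.In x s -> x \in s.
Proof. elim: s => [|y s IH] //= [->|h]; rewrite inE; first by rewrite eqxx. by rewrite IH ?orbT. Qed.

Lemma C_locfin (C : gops) (HG : is_group C) (phi : forall n, Lg n -> C) :
  (forall n (x y : Lg n), phi n (x * y)%g = gmul (phi n x) (phi n y)) ->
  (forall n (x : Lg n), phi n.+1 (Lemb x) = phi n x) ->
  (forall c : C, exists n (x : Lg n), phi n x = c) ->
  forall l : seq C, exists F : seq C, (forall a, List.In a l -> List.In a F) /\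
    List.In (gone C) F /\ (forall a b, List.In a F -> List.In b F -> List.In (gmul a b) F).
Proof.
move=> phiM phiL phiS l.
have [n hn] := level_list C phi phiL phiS l.
have hin : forall y : Lg n, List.In (phi n y) [seq phi n y | y <- enum (Lg n)].
  by move=> y; apply: List.in_map; apply: mem_In; rewrite mem_enum.
exists [seq phi n y | y <- enum (Lg n)]; split; last split.
- by move=> a /hn [y <-].
- by rewrite -(phi1 C HG phi phiM n); apply: hin.
- move=> a b /List.in_map_iff [y1 [<- _]] /List.in_map_iff [y2 [<- _]].
  by rewrite -phiM.
Qed.
Import Order.TTheory GRing.Theory Num.Theory.

Lemma gen_sub (G : gops) (S : G -> Prop) : is_subgroup (gen S).
Proof.
split; first by move=> H [h1 _] _.
split; first by move=> a b ha hb H hH hS; case: (hH) => _ [hM _]; apply: hM; [apply: ha|apply: hb].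
by move=> a ha H hH hS; case: (hH) => _ [_ hV]; apply: hV; apply: ha.
Qed.
Lemma gen_in (G : gops) (S : G -> Prop) x : S x -> gen S x.
Proof. by move=> hx H _ hS; apply: hS. Qed.

Section Main.
Local Open Scope ring_scope.
Variables (C : gops) (HG : is_group C) (c : nat -> C) (k : nat -> int) (f : int -> C).
Hypotheses (hc2 : forall s, gmul (c s) (c s) = gone C)
  (hkinc : forall s, (k s < k s.+1)%R)
  (hk2 : forall s, (2 * k s < k s.+1)%R)
  (hf1 : forall s, f (k s) = c s)
  (hf2 : forall x, (forall s, x <> k s) -> f x = gone C).
Local Notation "x ** y" := (gmul x y) (at level 40, left associativity).
Local Notation e := (gone C).
Local Notation iv := (@ginv C).

Lemma kmono (a b : nat) : (a <= b)%N -> k a <= k b.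
Proof.
elim: b => [|b IH]; first by rewrite leqn0 => /eqP ->.
rewrite leq_eqVlt => /orP[/eqP -> //|]; rewrite ltnS => /IH h.
by apply: le_trans h (ltW (hkinc b)).
Qed.
Lemma kgrow (s : nat) : k 0%N + s%:Z <= k s.
Proof.
elim: s => [|s IH]; first by rewrite addr0.
have := hkinc s; rewrite -addn1 PoszD; lia.
Qed.
Lemma kgap (a b : nat) : (a < b)%N -> k b.-1 < k b - k a.
Proof.
case: b => // b; rewrite ltnS => hab /=.
have := kmono hab; have := hk2 b; lia.
Qed.

Lemma far1 (d : int) : exists S, forall s : nat, (S <= s)%N -> d != 0 ->
  forall b, k s + d != k b.
Proof.
exists ((`|d| + `|k 0%N|).+1)%N => s hs hd b; apply/eqP => h.
have hs1 : `|d|%:Z <= k s.-1.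
  have := kgrow s.-1.
  have : ((`|d| + `|k 0%N|) <= s.-1)%N by move: hs; case: (s).
  move=> h1 h2.
  have h5 : - k 0%N <= `|k 0%N|%:Z by rewrite abszE ler_normr lexx orbT.
  move: h1 h2 h5; lia.
have hd1 : d <= `|d|%:Z by rewrite abszE ler_norm.
have hd2 : - d <= `|d|%:Z by rewrite abszE ler_normr lexx orbT.
have hss : k s.-1 <= k s by apply: kmono; apply: leq_pred.
case: (ltngtP s b) => hsb.
- have := kgap hsb.
  have : k s <= k b.-1 by apply: kmono; move: hsb; case: (b).
  move: hs1 hd1 hss; lia.
- have := kgap hsb.
  move: hs1 hd2 h; lia.
- by move: hd h; rewrite hsb; lia.
Qed.

Lemma far (Ds : seq int) : exists S, forall s : nat, (S <= s)%N -> forall d, d \in Ds -> d != 0 ->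
  forall b, k s + d != k b.
Proof.
elim: Ds => [|d Ds [S IH]]; first by exists 0%N.
have [S1 h1] := far1 d.
exists (maxn S S1) => s hs d'; rewrite inE => /orP[/eqP ->|hd].
  by apply: h1; apply: leq_trans hs; apply: leq_maxr.
by apply: IH => //; apply: leq_trans hs; apply: leq_maxl.
Qed.

Lemma f_nontriv x : f x <> e -> exists s, x = k s.
Proof.
move=> h; apply: NNPP => hn; apply: h; apply: hf2 => s hs; apply: hn; by exists s.
Qed.
Lemma f_inv x : iv (f x) = f x.
Proof.
case: (classic (exists s, x = k s)) => [[s ->]|hn].
  by rewrite hf1; apply: ginv_invol.
rewrite hf2; first exact: gV1.
by move=> s hs; apply: hn; exists s.
Qed.

Definition prodw (l : seq int) (z : int) : C := foldr (fun m acc => f (z - m) ** acc) e l.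

Lemma prodw_cat l1 l2 z : prodw (l1 ++ l2) z = prodw l1 z ** prodw l2 z.
Proof.
elim: l1 => [|m l1 IH] /=; first by rewrite g1x.
by rewrite IH gA.
Qed.
Lemma prodw_rev l z : iv (prodw l z) = prodw (rev l) z.
Proof.
elim: l => [|m l IH] /=; first exact: gV1.
by rewrite gVM // IH rev_cons -cats1 prodw_cat /= f_inv gx1.
Qed.
Lemma prodw_shift l n z : prodw [seq m + n | m <- l] z = prodw l (z - n).
Proof.
elim: l => [|m l IH] //=; rewrite IH; congr (f _ ** _); ring.
Qed.
Lemma prodw_shift' l n z : prodw l (z + n) = prodw [seq m - n | m <- l] z.
Proof.
elim: l => [|m l IH] //=; rewrite IH; congr (f _ ** _); ring.
Qed.

Lemma W_eq (u v : Wr C) : u.1 =1 v.1 -> u.2 = v.2 -> u = v.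
Proof.
case: u v => [u1 u2] [v1 v2] /= h1 ->; congr (_, _); exact: functional_extensionality.
Qed.

Definition emb (g : int -> C) : Wr C := (g, 0).
Lemma emb_mul g h : gmul (emb g) (emb h) = emb (fun z => g z ** h z).
Proof. by apply: W_eq => //= z; rewrite subr0. Qed.
Lemma emb_inv g : ginv (emb g) = emb (fun z => iv (g z)).
Proof. by apply: W_eq => //= z; rewrite addr0. Qed.

Definition tW : Wr C := (fun _ => e, 1).
Definition fW : Wr C := (f, 0).
Definition GW := gen (fun w : Wr C => w = fW \/ w = tW).

Lemma GW_sub : is_subgroup GW.
Proof. exact: gen_sub. Qed.
Lemma GW_mul u v : GW u -> GW v -> GW (gmul u v).
Proof. by case: GW_sub => _ [h _]; apply: h. Qed.
Lemma GW_inv u : GW u -> GW (ginv u).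
Proof. by case: GW_sub => _ [_ h]; apply: h. Qed.
Lemma GW_one : GW (gone (Wr C)).
Proof. by case: GW_sub. Qed.
Lemma GW_f : GW fW.
Proof. by apply: gen_in; left. Qed.
Lemma GW_t : GW tW.
Proof. by apply: gen_in; right. Qed.

Lemma GW_tpow (m : int) : GW (fun _ => e, m).
Proof.
have hn : forall n : nat, GW (fun _ => e, n%:Z).
  elim => [|n IH]; first exact: GW_one.
  have := GW_mul IH GW_t.
  have -> : gmul ((fun _ : int => e, n%:Z) : Wr C) tW = (fun _ => e, n.+1%:Z) :> Wr C.
    by apply: W_eq => [z|] /=; [rewrite g1x | rewrite intS addrC].
  done.
case: m => n; first exact: hn.
have := GW_inv (hn n.+1).
have -> : ginv ((fun _ : int => e, n.+1%:Z) : Wr C) = (fun _ => e, Negz n) :> Wr C.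
  by apply: W_eq => /= [z|]; [exact: gV1 | rewrite NegzE].
done.
Qed.

Lemma GW_shift g m : GW (emb g) -> GW (emb (fun z => g (z - m))).
Proof.
move=> hg.
have := GW_mul (GW_mul (GW_tpow m) hg) (GW_tpow (- m)).
have -> // : gmul (gmul ((fun _ : int => e, m) : Wr C) (emb g)) (fun _ => e, - m) =
  emb (fun z => g (z - m)) :> Wr C.
apply: W_eq => /= [z|]; first by rewrite /= (g1x HG) (gx1 HG).
by rewrite addr0 subrr.
Qed.

Lemma GW_shiftf m : GW (emb (fun z => f (z - m))).
Proof. apply: GW_shift; exact: GW_f. Qed.

Lemma GW_prodw l : GW (emb (prodw l)).
Proof.
elim: l => [|m l IH]; first exact: GW_one.
have := GW_mul (GW_shiftf m) IH; by rewrite emb_mul.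
Qed.

Lemma GW_struct w : GW w -> exists l, w.1 = prodw l.
Proof.
move=> hw; apply: (hw (fun w : Wr C => exists l, w.1 = prodw l)).
- split; first by exists [::].
  split.
    move=> [a1 a2] [b1 b2] [la /= ha] [lb /= hb].
    exists (la ++ [seq m + a2 | m <- lb]); apply: functional_extensionality => z.
    by rewrite /= prodw_cat prodw_shift ha hb.
  move=> [a1 a2] [la /= ha]; exists [seq m - a2 | m <- rev la].
  apply: functional_extensionality => z; by rewrite /= ha prodw_rev prodw_shift'.
- move=> x [->|->]; last by exists [::].
  exists [:: 0]; apply: functional_extensionality => z; by rewrite /= subr0 gx1.
Qed.


Lemma f_sq x : f x ** f x = e.
Proof. by rewrite -{1}(f_inv x) (gVx HG). Qed.

Lemma prodw_single l z m0 : (forall m, m \in l -> m != m0 -> f (z - m) = e) ->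
  prodw l z = if odd (count_mem m0 l) then f (z - m0) else e.
Proof.
elim: l => [|m l IH] //= h.
rewrite IH; last by move=> m' hm' hne; apply: h => //; rewrite inE hm' orbT.
case: (eqVneq m m0) => [->|hne] /=.
  rewrite ?eqxx /=; case: (odd (count_mem m0 l)) => /=; first exact: f_sq.
  exact: (gx1 HG).
rewrite (h m) ?inE ?eqxx // (g1x HG).
by rewrite add0n.
Qed.

Lemma prodw_triv l z : (forall m, m \in l -> f (z - m) = e) -> prodw l z = e.
Proof.
elim: l => [|m l IH] //= h; rewrite h ?inE ?eqxx // IH ?(g1x HG) //.
by move=> m' hm'; apply: h; rewrite inE hm' orbT.
Qed.

Fixpoint tuples (X : Type) (A : list X) (n : nat) : list (list X) :=
  match n with
  | 0%N => [:: [::]]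
  | n'.+1 => List.flat_map (fun a => List.map (cons a) (tuples A n')) A
  end.
Lemma tuples_in (X : Type) (A : list X) vs : (forall x, List.In x vs -> List.In x A) ->
  List.In vs (tuples A (size vs)).
Proof.
elim: vs => [|v vs IH] h /=; first by left.
apply/List.in_flat_map; exists v; split; first by apply: h; left.
apply: List.in_map; apply: IH => x hx; apply: h; by right.
Qed.

Hypothesis hloc : forall l : seq C, exists F : seq C, (forall a, List.In a l -> List.In a F) /\
    List.In e F /\ (forall a b, List.In a F -> List.In b F -> List.In (a ** b) F).

Lemma part2_lf : locally_finite (fun w : Wr C => GW w /\ w.2 = 0).
Proof.
move=> s hs.
have [ms hms] : exists ms : seq int, forall x, List.In x s ->
    exists l, {subset l <= ms} /\ x = emb (prodw l).
  elim: s hs => [|x s IH] hs; first by exists [::].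
  have [ms hms] := IH (fun y hy => hs y (or_intror hy)).
  have [hx hx2] := hs x (or_introl erefl).
  have [l hl] := GW_struct hx.
  exists (l ++ ms) => y [<-|hy].
    exists l; split; first by move=> m hm; rewrite mem_cat hm.
    by case: (x) hl hx2 => x1 x2 /= -> ->.
  have [l' [hl' ->]] := hms y hy; exists l'; split => // m hm.
  by rewrite mem_cat hl' ?orbT.
pose H := fun w : Wr C => exists l, {subset l <= ms} /\ w = emb (prodw l).
exists H; split; last split; last split.
- split; first by exists [::].
  split.
    move=> a b [la [hla ->]] [lb [hlb ->]]; exists (la ++ lb); split.
      by move=> m; rewrite mem_cat => /orP[/hla|/hlb].
    by rewrite emb_mul; congr emb; apply: functional_extensionality => z; rewrite prodw_cat.
  move=> a [la [hla ->]]; exists (rev la); split; first by move=> m; rewrite mem_rev => /hla.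
  by rewrite emb_inv; congr emb; apply: functional_extensionality => z; rewrite prodw_rev.
- move=> x [l [_ ->]]; split => //; exact: GW_prodw.
- by move=> x /hms.
pose ms' := undup ms.
pose Ds := [seq m - m' | m <- ms, m' <- ms].
have [S hS] := far Ds.
pose Zs := [seq k a + m | a <- iota 0 S, m <- ms].
have hU : forall z, z \notin Zs -> forall m m', m \in ms -> m' \in ms ->
    f (z - m) <> e -> f (z - m') <> e -> m = m'.
  move=> z hz m m' hm hm' /f_nontriv [a ha] /f_nontriv [b hb].
  case: (eqVneq m m') => // hne.
  case: (ltnP a S) => haS.
    move/negP: hz; case; apply/allpairsP; exists (a, m); split => //=.
      by rewrite mem_iota.
    by rewrite -ha; ring.
  have := hS a haS (m - m') _ _ b.
  rewrite -ha -hb.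
  have -> : z - m + (m - m') = z - m' by ring.
  rewrite eqxx => /(_ _ _)/negP; case => //.
    by apply/allpairsP; exists (m, m').
  by rewrite subr_eq0.
have [F [hF1 [hFe hFM]]] := hloc (List.flat_map (fun z => List.map (fun m => f (z - m)) ms) Zs).
have hFw : forall l, {subset l <= ms} -> forall z, z \in Zs -> List.In (prodw l z) F.
  elim => [|m l IH] hl z hz //=.
  apply: hFM; last by apply: IH => // m' hm'; apply: hl; rewrite inE hm' orbT.
  apply: hF1; apply/List.in_flat_map; exists z; split; first exact: mem_In.
  apply: (List.in_map (fun m => f (z - m))); apply: mem_In.
  by apply: hl; rewrite inE eqxx.
pose recw (vs : seq C) (ps : seq bool) : Wr C :=
  emb (fun z => if z \in Zs then nth e vs (index z Zs) else prodw (mask ps ms') z).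
exists (List.flat_map (fun vs => List.map (recw vs) (tuples [:: true; false] (size ms')))
  (tuples F (size Zs))).
move=> x [l [hl ->]].
apply/List.in_flat_map; exists (map (prodw l) Zs); split.
  rewrite -(size_map (prodw l) Zs); apply: tuples_in => y /List.in_map_iff [z [<- hz]].
  by apply: hFw => //; apply: In_mem.
have -> : emb (prodw l) = recw (map (prodw l) Zs) [seq odd (count_mem m l) | m <- ms'].
  rewrite /recw; congr emb; apply: functional_extensionality => z.
  case: ifP => hz.
    by rewrite (nth_map 0) ?index_mem // nth_index.
  rewrite -filter_mask.
  case: (classic (exists m0, m0 \in ms /\ f (z - m0) <> e)) => [[m0 [hm0 hf0]]|hn].
    have hsing : forall l' : seq int, {subset l' <= ms} -> forall m, m \in l' -> m != m0 -> f (z - m) = e.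
      move=> l' hl' m hm hne; apply: NNPP => hfm; move/negP: hne; apply; apply/eqP.
      exact: (hU z (negbT hz) m m0 (hl' _ hm) hm0 hfm hf0).
    have hsub : {subset [seq m <- ms' | odd (count_mem m l)] <= ms}.
      by move=> m; rewrite mem_filter mem_undup => /andP[].
    rewrite (prodw_single (hsing l hl)) (prodw_single (hsing _ hsub)).
    have -> : count_mem m0 [seq m <- ms' | odd (count_mem m l)] = odd (count_mem m0 l).
      rewrite count_uniq_mem ?filter_uniq ?undup_uniq // mem_filter mem_undup hm0 andbT.
      by [].
    by case: (odd (count_mem m0 l)).
  have hsub : {subset [seq m <- ms' | odd (count_mem m l)] <= ms}.
    by move=> m; rewrite mem_filter mem_undup => /andP[].
  rewrite !prodw_triv // => m hm; apply: NNPP => hfm; apply: hn; exists m; split => //.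
  - exact: hsub.
  - exact: hl.
apply: List.in_map.
rewrite -(size_map (fun m => odd (count_mem m l)) ms'); apply: tuples_in => b _ /=.
by case: b; [left|right; left].
Qed.

Hypothesis hgen : forall g : C, gen (fun x => exists s, x = c s) g.
Hypothesis hsimple : forall N : C -> Prop, N e -> (forall a b, N a -> N b -> N (a ** b)) ->
  (forall a, N a -> N (iv a)) -> (forall g a, N a -> N (g ** a ** iv g)) ->
  forall v, N v -> v <> e -> forall a, N a.
Hypothesis hnonab : exists a b : C, a ** b <> b ** a.
Hypothesis hfg : forall S : nat, ~ (forall s, (S <= s)%N -> c s = e).

Lemma gen_all (N : C -> Prop) : N e -> (forall a b, N a -> N b -> N (a ** b)) ->
  (forall a, N a -> N (iv a)) -> (forall s, N (c s)) -> forall a, N a.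
Proof.
move=> h1 hM hV hc a; have := hgen a; rewrite /gen => h; apply: h.
  by split => //; split.
by move=> x [s ->].
Qed.

Lemma central_triv x : (forall y, x ** y = y ** x) -> x = e.
Proof.
move=> hx; apply: NNPP => hne.
have [a [b hab]] := hnonab; apply: hab.
pose Z := fun u : C => forall y, u ** y = y ** u.
have hall : forall u, Z u.
  apply: (hsimple (N := Z)) hx hne.
  - by move=> y; rewrite (g1x HG) (gx1 HG).
  - by move=> u w hu hw y; rewrite -(gA HG) hw (gA HG) hu (gA HG).
  - move=> u hu y.
    rewrite -{1}(gx1 HG (iv u ** y)) -(gxV HG u) (gA HG) -((gA HG) (iv u) y u) -hu.
    by rewrite (gA HG) (gVx HG) (g1x HG).
  - move=> g u hu y; rewrite -(hu g) -(gA HG u g) (gxV HG) (gx1 HG); exact: hu.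
by apply: hall.
Qed.

Lemma comm_ne (a b : C) : a ** b <> b ** a -> a ** b ** iv a ** iv b <> e.
Proof.
move=> h h1; apply: h.
have h2 : a ** b ** iv a = b by apply: (gcanr HG (a := iv b)); rewrite h1 (gxV HG).
by rewrite -{2}h2 -(gA HG (a ** b)) (gVx HG) (gx1 HG).
Qed.

Lemma hu (z1 : int) (gg : C) : exists ug, GW (emb ug) /\ ug z1 = gg.
Proof.
move: gg; apply: gen_all.
- by exists (fun _ => e); split => //; exact: GW_one.
- move=> a b [ua [hua <-]] [ub [hub <-]]; exists (fun z => ua z ** ub z); split => //.
  by rewrite -emb_mul; apply: GW_mul.
- move=> a [ua [hua <-]]; exists (fun z => iv (ua z)); split => //.
  by rewrite -emb_inv; apply: GW_inv.
- move=> s; exists (fun z => f (z - (z1 - k s))); split; first exact: GW_shiftf.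
  by rewrite opprB addrC subrK hf1.
Qed.

Definition delta (z : int) (a : C) : Wr C := emb (fun y => if y == z then a else e).

Lemma T_all : (exists z a, a <> e /\ GW (delta z a)) -> forall a, GW (delta 0 a).
Proof.
move=> [z [a [ha hz]]].
have h0 : GW (delta 0 a).
  have := GW_shift (- z) hz; congr GW; congr emb; apply: functional_extensionality => y.
  rewrite opprK; case: (eqVneq y 0) => [->|hy]; first by rewrite add0r eqxx.
  have -> : (y + z == z) = false by apply/eqP => h; move/eqP: hy; apply; move: h; lia.
  by [].
apply: (hsimple (N := fun a => GW (delta 0 a))) h0 ha.
- have := GW_one; congr GW; rewrite /delta /emb; congr pair.
  by apply: functional_extensionality => y; case: (y == 0).
- move=> u w hu hw; have := GW_mul hu hw; rewrite emb_mul; congr GW; congr emb.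
  apply: functional_extensionality => y; case: (y == 0) => //; exact: (g1x HG).
- move=> u hu; have := GW_inv hu; rewrite emb_inv; congr GW; congr emb.
  apply: functional_extensionality => y; case: (y == 0) => //; exact: (gV1 HG).
- move=> g u hu0; have [ug [hug hug0]] := hu 0 g.
  have := GW_mul (GW_mul hug hu0) (GW_inv hug); rewrite emb_inv !emb_mul; congr GW; congr emb.
  apply: functional_extensionality => y; case: (eqVneq y 0) => [->|hy] //=.
    by rewrite hug0.
  by rewrite subr0 (negbTE hy) (gx1 HG) (gxV HG).
Qed.

Lemma comm_t1 (X : C) : X ** e ** iv X ** iv e = e.
Proof. by rewrite (gx1 HG) (gxV HG) (gV1 HG) (gx1 HG). Qed.
Lemma comm_t2 (F : C) : e ** F ** iv e ** iv F = e.
Proof. by rewrite (g1x HG) (gV1 HG) (gx1 HG) (gxV HG). Qed.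
Lemma conj_e (g : C) : g ** e ** iv g = e.
Proof. by rewrite (gx1 HG) (gxV HG). Qed.
Lemma conj_mul (g a b : C) : g ** (a ** b) ** iv g = (g ** a ** iv g) ** (g ** b ** iv g).
Proof. by rewrite !(gA HG) -((gA HG) _ (iv g) g) (gVx HG) (gx1 HG). Qed.
Lemma conj_inv (g a : C) : g ** iv a ** iv g = iv (g ** a ** iv g).
Proof. by rewrite !(gVM HG) (gVK HG) (gA HG). Qed.
Lemma comm_mulC (x z y : C) : x ** y = y ** x -> z ** y = y ** z -> x ** z ** y = y ** (x ** z).
Proof. by move=> h1 h2; rewrite -(gA HG) h2 (gA HG) h1 (gA HG). Qed.
Lemma comm_invC (u y : C) : u ** y = y ** u -> iv u ** y = y ** iv u.
Proof.
move=> hu0.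
rewrite -{1}(gx1 HG (iv u ** y)) -(gxV HG u) (gA HG) -((gA HG) (iv u) y u) -hu0.
by rewrite (gA HG) (gVx HG) (g1x HG).
Qed.
Lemma conj_conj (g h a : C) : g ** (h ** a ** iv h) ** iv g = (g ** h) ** a ** iv (g ** h).
Proof. by rewrite (gVM HG) !(gA HG). Qed.

Lemma kstrict (a b : nat) : (a < b)%N -> k a < k b.
Proof. move=> h; apply: lt_le_trans (hkinc a) (kmono h). Qed.
Lemma kinj : injective k.
Proof.
move=> a b h; case: (ltngtP a b) => // hab; have := kstrict hab; rewrite h ltxx //.
Qed.

Lemma reduce (g : int -> C) (Z0 : seq int) (z1 : int) : GW (emb g) ->
  (forall z, z \notin Z0 -> g z = e) -> g z1 <> e -> exists a, a <> e /\ GW (delta z1 a).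
Proof.
move=> hg hsupp hv.
set v := g z1.
pose Ds := [seq z - z1 | z <- Z0].
have [S hS] := far Ds.
have [gg [s [hs hnc]]] : exists gg s, (S <= s)%N /\
    (gg ** v ** iv gg) ** c s <> c s ** (gg ** v ** iv gg).
  apply: NNPP => hn.
  pose P := fun x => forall gg s, (S <= s)%N -> (gg ** x ** iv gg) ** c s = c s ** (gg ** x ** iv gg).
  have hP : forall x, P x.
    move=> x; refine (@hsimple P _ _ _ _ v _ hv x).
    - by move=> gg s' _; rewrite conj_e (g1x HG) (gx1 HG).
    - move=> a b ha hb gg s' hs'; rewrite conj_mul; apply: comm_mulC; [exact: ha|exact: hb].
    - move=> a ha gg s' hs'; rewrite conj_inv; apply: comm_invC; exact: ha.
    - move=> g' a ha gg s' hs'; rewrite conj_conj; exact: ha.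
    - move=> gg s' hs'; apply: NNPP => hne; apply: hn; exists gg, s'; split => //.
  move: (@hfg S); apply => s' hs'; apply: central_triv => y.
  have := hP y e s' hs'; rewrite (g1x HG) (gV1 HG) (gx1 HG) => ->; by [].
have [ug [hug hug1]] := hu z1 gg.
set m := z1 - k s.
have hX := GW_mul (GW_mul (GW_mul (GW_mul (GW_mul hug hg) (GW_inv hug)) (GW_shiftf m))
  (GW_inv (GW_mul (GW_mul hug hg) (GW_inv hug)))) (GW_inv (GW_shiftf m)).
rewrite !emb_inv !emb_mul in hX.
set w := gg ** v ** iv gg.
exists (w ** c s ** iv w ** iv (c s)); split; first exact: comm_ne.
move: hX; congr GW; congr emb; apply: functional_extensionality => y.
rewrite /= ?subr0 ?addr0.
case: (eqVneq y z1) => [->|hy].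
  by rewrite hug1 /m opprB addrC subrK hf1.
case: (boolP (y \in Z0)) => hyZ; last by rewrite hsupp // conj_e comm_t2.
rewrite (hf2 (x := y - m)); first exact: comm_t1.
move=> b hb.
have hd : y - z1 \in Ds by apply/mapP; exists y.
have hd0 : y - z1 != 0 by rewrite subr_eq0.
move/negP: (hS s hs _ hd hd0 b); apply; apply/eqP; rewrite -hb /m; ring.
Qed.

Lemma seed : exists (g : int -> C) (Z0 : seq int) (z1 : int), GW (emb g) /\ (forall z, z \notin Z0 -> g z = e) /\ g z1 <> e.
Proof.
have [i [j hij]] : exists i j, c j ** c i <> c i ** c j.
  apply: NNPP => hn.
  move: (@hfg 0); apply => s _; apply: central_triv; apply: gen_all.
  - by rewrite (g1x HG) (gx1 HG).
  - move=> a b ha hb; by rewrite (gA HG) ha -(gA HG) hb (gA HG).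
  - move=> a ha; apply: esym; apply: comm_invC; by rewrite ha.
  - move=> s'; apply: NNPP => hne; apply: hn; exists s', s; by move=> h; apply: hne.
set D := k j - k i.
have hD : D != 0.
  rewrite /D subr_eq0; apply/eqP => /kinj hji; subst j; by apply: hij.
pose g := fun z => f z ** f (z - D) ** iv (f z) ** iv (f (z - D)).
have [S hS] := far [:: - D].
exists g, [seq k a | a <- iota 0 S], (k j); split; last split.
- have := GW_mul (GW_mul (GW_mul GW_f (GW_shiftf D)) (GW_inv GW_f)) (GW_inv (GW_shiftf D)).
  rewrite -[fW]/(emb f) !emb_inv !emb_mul; by [].
- move=> z hz; rewrite /g.
  case: (classic (f z = e)) => [->|hfz]; first exact: comm_t2.
  case: (classic (f (z - D) = e)) => [->|hfzD]; first exact: comm_t1.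
  have [a ha] := f_nontriv hfz; have [b hb] := f_nontriv hfzD.
  case: (ltnP a S) => haS.
    by move/negP: hz; case; apply/mapP; exists a; rewrite ?mem_iota.
  have := hS a haS (- D); rewrite inE eqxx oppr_eq0 hD => /(_ isT isT b).
  by rewrite -ha -hb eqxx.
- rewrite /g hf1 (_ : k j - D = k i); last by rewrite /D; ring.
  rewrite hf1; exact: comm_ne.
Qed.

Lemma part1 : exists psi : C -> Wr C, injective psi /\
     (forall a b, psi (a ** b) = gmul (psi a) (psi b)) /\ (forall a, GW (psi a)).
Proof.
have [g [Z0 [z1 [hg [hs hz]]]]] := seed.
have [a [ha hd]] := reduce hg hs hz.
have hall := T_all (ex_intro _ z1 (ex_intro _ a (conj ha hd))).
exists (delta 0); split; last split => //.
- move=> x y h; have := congr1 (fun w : Wr C => w.1 0) h; by rewrite /= ?eqxx.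
- move=> x y; rewrite /delta emb_mul; congr emb; apply: functional_extensionality => z.
  by case: (z == 0) => //; rewrite (g1x HG).
Qed.
End Main.

Theorem fact5p2 (C : gops) (HC : is_Hall_universal C)
  (c : nat -> C) (k : nat -> int) (f : int -> C)
  (hc2 : forall s, gmul (c s) (c s) = gone C)
  (hgen : forall g : C, gen (fun x => exists s, x = c s) g)
  (hkinc : forall s, (k s < k s.+1)%R)
  (hk2 : forall s, (2 * k s < k s.+1)%R)
  (hf1 : forall s, f (k s) = c s)
  (hf2 : forall x, (forall s, x <> k s) -> f x = gone C) :
  let W := Wr C in
  let t : W := (fun _ => gone C, 1%R) in
  let fw : W := (f, 0%R) in
  let G := gen (fun w : W => w = fw \/ w = t) in
  (exists psi : C -> W, injective psi /\
     (forall a b, psi (gmul a b) = gmul (psi a) (psi b)) /\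
     (forall a, G (psi a))) /\
  (exists pi : W -> int,
     (forall a b, G a -> G b -> pi (gmul a b) = (pi a + pi b)%R) /\
     (forall z : int, exists w, G w /\ pi w = z) /\
     locally_finite (fun w => G w /\ pi w = 0%R)).
Proof.
move=> W t fw G.
have [HG [phi [phiM [phiI [phiL phiS]]]]] := HC.
have hsimple := C_simple C HG phi phiM phiL phiS.
have hnonab := C_nonab C phi phiM phiI.
have hfg := C_fg C HG phi phiM phiI phiL phiS c hgen.
have hloc := C_locfin HG phiM phiL phiS.
split.
  exact: (part1 HG hkinc hk2 hf1 hf2 hgen hsimple hnonab hfg).
exists (fun w : W => w.2); split; last split.
- by [].
- move=> z; exists ((fun _ => gone C, z) : W); split => //.
  exact: (@GW_tpow C HG f z).
- exact: (part2_lf HG hc2 hkinc hk2 hf1 hf2 hloc).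
Qed.
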